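(* Let $n\ge4$, $1\le j\le\lfloor n/2\rfloor$, $G=C_n(\{1,\dots,\lfloor n/2\rfloor\}\setminus\{j\})$ and $k=n/\gcd(n,j)$. Then (i) $\nu(G)=2$ if $k=4$ and $\nu(G)=1$ otherwise; (ii) $G$ is well-covered and Buchsbaum; (iii) $G$ is vertex decomposable (respectively shellable, Cohen–Macaulay, sequentially Cohen–Macaulay, $S_2$) if and only if $\gcd(n,j)=1$.
   Context: The circulant graph $C_n(S)$ ($S\subseteq\{1,\dots,\lfloor n/2\rfloor\}$) has vertex set $\{0,\dots,n-1\}$ with $\{a,b\}$ an edge iff $\min(|a-b|,n-|a-b|)\in S$. Fix a field $\mathbb{K}$. $\Delta_G$ is the independence complex of $G$. $G$ is well-covered if all maximal independent sets have the same cardinality. $\nu(G)$ is the maximum number of edges in an induced matching (pairwise disjoint edges such that the induced subgraph on their endpoints has exactly these edges). For a face $F$, $\mathrm{lk}(F)=\{H\in\Delta:H\cap F=\emptyset,H\cup F\in\Delta\}$, $\mathrm{del}(F)=\{H\in\Delta:H\cap F=\emptyset\}$. $G$ is Cohen–Macaulay if $\widetilde H_i(\mathrm{lk}_{\Delta_G}(F);\mathbb{K})=0$ for every face $F$ and $i<\dim\mathrm{lk}_{\Delta_G}(F)$; Buchsbaum if $G\setminus N_G[x]$ is Cohen–Macaulay for every vertex $x$; $S_2$ if $\mathrm{lk}_{\Delta_G}(F)$ is connected for every face $F$ with $\dim\mathrm{lk}_{\Delta_G}(F)\ge1$; sequentially Cohen–Macaulay if each pure $i$-th skeleton of $\Delta_G$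 (generated by the $i$-dimensional faces) is Cohen–Macaulay. A pure complex is vertex decomposable if it is a simplex or has a vertex $x$ with $\mathrm{lk}(x)$, $\mathrm{del}(x)$ vertex decomposable; shellable if pure with a facet order $F_1<\dots<F_r$ such that for all $j<i$ there are $x\in F_i\setminus F_j$ and $k<i$ with $F_i\setminus F_k=\{x\}$. $G$ has a property when $\Delta_G$ does. *)

(* Defs.v *)
From HB Require Import structures.
From mathcomp Require Import all_boot all_order all_algebra.
Set Implicit Arguments. Unset Strict Implicit. Unset Printing Implicit Defensive.
Import GRing.Theory Num.Theory.

(* Simplicial complexes on a finite vertex type T are represented as
   families of faces D : {set {set T}} (closed under subsets in all uses). *)
Section Complexes.
Variable T : finType.
Implicit Types (D : {set {set T}}) (F : {set T}).

Definition lk D F : {set {set T}} :=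
  [set H in D | [disjoint H & F] && (H :|: F \in D)].
Definition del D F : {set {set T}} := [set H in D | [disjoint H & F]].

Definition dimc D : int := ((\max_(F in D) #|F|)%N%:Z - 1)%R.

Definition facets D : {set {set T}} :=
  [set F in D | [forall H in D, (F \subset H) ==> (H == F)]].
Definition pure D : Prop := forall F H, F \in facets D -> H \in facets D -> #|F| = #|H|.

(* augmented simplicial chain complex over a field K:
   C_{k-1} has basis the faces of cardinality k (so C_{-1} = K <empty face>). *)
Definition faces_sz D (k : nat) : seq {set T} := enum [set F in D | #|F| == k].
Definition cols D (k : nat) : seq {set T} :=
  if k is k'.+1 then faces_sz D k' else [::].
Definition pos (s : {set T}) (v : T) : nat :=
  #|[set u in s | (enum_rank u < enum_rank v)%N]|.

(* boundary map from faces of size k to faces of size k-1, acting on row vectors *)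
Definition bd (K : fieldType) D (k : nat)
  : 'M[K]_(size (faces_sz D k), size (cols D k)) :=
  \matrix_(a, b)
    (let s := nth set0 (faces_sz D k) a in
     let t := nth set0 (cols D k) b in
     if (t \subset s) && (#|s| == #|t|.+1)
     then \sum_(v in s :\: t) (-1) ^+ pos s v else 0)%R.

(* reduced homology  \tilde H_i(D; K) vanishes *)
Definition hvanish (K : fieldType) D (i : int) : Prop :=
  match i with
  | Posz m => (kermx (bd K D m.+1) <= bd K D m.+2)%MS
  | Negz 0 => (kermx (bd K D 0) <= bd K D 1)%MS
  | Negz _ => True
  end.

Definition CM (K : fieldType) D : Prop :=
  forall F, F \in D -> forall i : int, (i < dimc (lk D F))%R -> hvanish K (lk D F) i.

Definition connectedc D : Prop :=
  forall u v, [set u] \in D -> [set v] \in D ->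
    connect (fun x y => [set x; y] \in D) u v.

Definition S2 D : Prop :=
  forall F, F \in D -> (1 <= dimc (lk D F))%R -> connectedc (lk D F).

(* pure i-th skeleton: generated by the i-dimensional faces *)
Definition skel D (i : nat) : {set {set T}} :=
  [set F : {set T} | [exists H in D, (#|H| == i.+1) && (F \subset H)]].

Definition seqCM (K : fieldType) D : Prop := forall i : nat, CM K (skel D i).

Inductive vdec : {set {set T}} -> Prop :=
| vdec_simplex (F : {set T}) : vdec (powerset F)
| vdec_step D (x : T) : pure D -> [set x] \in D ->
    vdec (lk D [set x]) -> vdec (del D [set x]) -> vdec D.

Definition shellable D : Prop :=
  pure D /\
  exists s : seq {set T}, perm_eq s (enum (facets D)) /\
    forall i j, (j < i < size s)%N ->
      exists2 x, x \in nth set0 s i :\: nth set0 s j &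
      exists2 k, (k < i)%N & nth set0 s i :\: nth set0 s k = [set x].

(* Graphs: vertex set V with adjacency e (symmetric, irreflexive) *)
Definition independent (V : {set T}) (e : rel T) (A : {set T}) : bool :=
  (A \subset V) && [forall x in A, forall y in A, ~~ e x y].
Definition indep_complex (V : {set T}) (e : rel T) : {set {set T}} :=
  [set A | independent V e A].
Definition max_independent (V : {set T}) (e : rel T) (A : {set T}) : Prop :=
  independent V e A /\ forall B, independent V e B -> A \subset B -> B = A.
Definition well_covered (V : {set T}) (e : rel T) : Prop :=
  forall A B, max_independent V e A -> max_independent V e B -> #|A| = #|B|.

Definition nbhd (e : rel T) (x : T) : {set T} := [set y | (y == x) || e x y].
Definition buchsbaum (K : fieldType) (V : {set T}) (e : rel T) : Prop :=
  forall x, x \in V -> CM K (indep_complex (V :\: nbhd e x) e).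

Definition induced_matching (V : {set T}) (e : rel T) (M : {set {set T}}) : bool :=
  [&& [forall E in M, [&& E \subset V, #|E| == 2 &
                         [forall x in E, forall y in E, (x != y) ==> e x y]]],
      [forall E in M, forall E' in M, (E != E') ==> [disjoint E & E']] &
      [forall x in cover M, forall y in cover M,
         e x y ==> [exists E in M, (x \in E) && (y \in E)]]].

Definition nu (V : {set T}) (e : rel T) : nat :=
  \max_(M : {set {set T}} | induced_matching V e M) #|M|.

End Complexes.

Definition circulant (n : nat) (S : pred nat) : rel 'I_n :=
  fun a b => let d := (maxn a b - minn a b)%N in S (minn d (n - d)).
Arguments circulant n S : clear implicits.

(* Main.v *)
Require Import Defs.
From mathcomp Require Import all_boot all_order all_algebra zify.
Set Implicit Arguments. Unset Strict Implicit. Unset Printing Implicit Defensive.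
Import GRing.Theory Num.Theory.
Local Open Scope ring_scope.

Lemma sum_nth_pick (R : pzSemiRingType) (T : eqType) (r : seq T) x0 (s : T) (F : T -> R) :
  uniq r -> \sum_(i < size r) (nth x0 r i == s)%:R * F (nth x0 r i) = (s \in r)%:R * F s.
Proof.
move=> ur.
rewrite -(big_mkord xpredT (fun i => (nth x0 r i == s)%:R * F (nth x0 r i))).
rewrite -(big_nth x0 xpredT (fun x => (x == s)%:R * F x)).
rewrite (bigID (fun x => x == s)) /= [X in _ + X]big1 ?addr0; last first.
  by move=> i /negbTE ->; rewrite mul0r.
rewrite (eq_bigr (fun x => F x)); last by move=> i ->; rewrite mul1r.
case: (boolP (s \in r)) => sr; last first.
  rewrite big_seq_cond big_pred0 ?mul0r // => x; apply/andP => [[xr /eqP xs]].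
  by rewrite -xs xr in sr.
rewrite (big_rem s sr) /= eqxx mul1r big_seq_cond big_pred0 ?addr0 // => x.
apply/andP => [[xr /eqP xs]]; move: ur; rewrite (perm_uniq (perm_to_rem sr)) /=.
by case/andP => /negP H _; apply: H; move: xr; rewrite xs.
Qed.

Section Hom.
Variables (T : finType) (K : fieldType).
Implicit Types (D : {set {set T}}).

Definition closedc D := forall F H : {set T}, F \in D -> H \subset F -> H \in D.
Definition edg D : rel T := fun x y => [set x; y] \in D.

Lemma faces_szP D k F : (F \in faces_sz D k) = (F \in D) && (#|F| == k).
Proof. by rewrite /faces_sz mem_enum inE. Qed.

Lemma nth_faces D k (i : 'I_(size (faces_sz D k))) :
  nth set0 (faces_sz D k) i \in D /\ #|nth set0 (faces_sz D k) i| = k.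
Proof. by have := mem_nth set0 (ltn_ord i); rewrite faces_szP => /andP[-> /eqP ->]. Qed.

Lemma uniq_faces D k : uniq (faces_sz D k).
Proof. exact: enum_uniq. Qed.

Lemma pos1 (w : T) : pos [set w] w = 0%N.
Proof.
rewrite /pos; apply/eqP; rewrite cards_eq0; apply/eqP/setP => u; rewrite !inE.
by case: eqP => // ->; rewrite ltnn.
Qed.

Lemma bd1_const D : bd K D 1 = const_mx 1.
Proof.
apply/matrixP => q b; rewrite !mxE /=.
have [_ ht] := nth_faces (b : 'I_(size (faces_sz D 0))).
have [_ hs] := nth_faces q.
move: ht => /eqP; rewrite cards_eq0 => /eqP ->.
move: hs => /eqP /cards1P [w ->].
by rewrite sub0set cards1 cards0 eqxx /= setD0 big_set1 pos1 expr0.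
Qed.

Definition vec1 D (s : {set T}) : 'rV[K]_(size (faces_sz D 1)) :=
  \row_q ((nth set0 (faces_sz D 1) q == s)%:R).

Lemma vec1_mul D s (f : 'cV[K]_(size (faces_sz D 1))) (phi : {set T} -> K) :
  (forall q, f q 0 = phi (nth set0 (faces_sz D 1) q)) ->
  (vec1 D s *m f) 0 0 = (s \in faces_sz D 1)%:R * phi s.
Proof.
move=> hf; rewrite mxE -(sum_nth_pick set0 s phi (uniq_faces D 1)).
by apply: eq_bigr => q _; rewrite mxE hf.
Qed.

Lemma vec1_const D s m :
  vec1 D s *m (const_mx 1 : 'M_(_, m)) = const_mx ((s \in faces_sz D 1)%:R).
Proof.
apply/matrixP => i b; rewrite !mxE -[RHS]mulr1.
rewrite -(sum_nth_pick set0 s (fun=> (1:K)) (uniq_faces D 1)).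
by apply: eq_bigr => q _; rewrite !mxE.
Qed.

Lemma pos2 (a b : T) : a != b ->
  pos [set a; b] a = (enum_rank b < enum_rank a)%N.
Proof.
move=> ab; rewrite /pos.
have -> : [set u in [set a; b] | (enum_rank u < enum_rank a)%N] =
   if (enum_rank b < enum_rank a)%N then [set b] else set0.
  case: ifP => h; apply/setP => u; rewrite !inE;
  (case: (eqVneq u a) => [->|ua]; first by rewrite ltnn andbF ?(negbTE ab));
  by case: (eqVneq u b) => [->|ub] //=; rewrite ?h ?orbT ?andbT.
by case: ifP => _; rewrite ?cards1 ?cards0.
Qed.

Lemma posD (a b : T) : a != b ->
  (-1) ^+ pos [set a; b] a = - (-1) ^+ pos [set a; b] b :> K.
Proof.
move=> ab; rewrite pos2 // setUC pos2 1?eq_sym //.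
case: (ltngtP (enum_rank a : nat) (enum_rank b)) => h /=; rewrite ?expr1 ?expr0 ?opprK //.
by move/ord_inj/enum_rank_inj: h => h; rewrite h eqxx in ab.
Qed.

Lemma set1_eq (a b : T) : ([set a] == [set b]) = (a == b).
Proof. exact: (inj_eq set1_inj). Qed.

Lemma setD2l (a b : T) : a != b -> [set a; b] :\ a = [set b].
Proof. by move=> ab; rewrite setU1K // inE. Qed.
Lemma setD2r (a b : T) : a != b -> [set a; b] :\ b = [set a].
Proof. by move=> ab; rewrite setUC setU1K // inE eq_sym. Qed.

Lemma row_bd2 D (p : 'I_(size (faces_sz D 2))) a b :
  nth set0 (faces_sz D 2) p = [set a; b] -> a != b ->
  row p (bd K D 2) = (-1) ^+ pos [set a; b] b *: (vec1 D [set a] - vec1 D [set b]).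
Proof.
move=> hp ab; apply/rowP => q; rewrite !mxE /= hp.
have [_ /eqP /cards1P [w hw]] := nth_faces (q : 'I_(size (faces_sz D 1))).
rewrite hw cards1 cards2 ab /= sub1set !set1_eq !inE.
case: (eqVneq w a) => [->|wa] /=.
  by rewrite setD2l // big_set1 (negbTE ab) subr0 mulr1.
case: (eqVneq w b) => [->|wb] /=; last by rewrite subr0 mulr0.
by rewrite setD2r // big_set1 posD // sub0r mulrN1.
Qed.


Lemma mxsubE m n (A B : 'M[K]_(m,n)) i j : (A - B) i j = A i j - B i j.
Proof. by rewrite !mxE. Qed.
Lemma mxscaleE m n a (A : 'M[K]_(m,n)) i j : (a *: A) i j = a * A i j.
Proof. by rewrite mxE. Qed.

Lemma connect_ind' (e : rel T) (P : T -> T -> Prop) :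
  (forall x, P x x) -> (forall x y z, e x y -> P y z -> P x z) ->
  forall x y, connect e x y -> P x y.
Proof.
move=> r st x y /connectP [p]; elim: p x => [|z p IH] x /=; first by move=> _ ->.
by case/andP => exz pp hy; exact: (st x z _ exz (IH z pp hy)).
Qed.

Lemma sign2 k : (-1) ^+ k * (-1) ^+ k = 1 :> K.
Proof. by rewrite -exprD -signr_odd oddD addbb expr0. Qed.

Lemma vec1_diff_sub D x y : connect (edg D) x y ->
  (vec1 D [set x] - vec1 D [set y] <= bd K D 2)%MS.
Proof.
apply: (connect_ind' (P := fun x y => (vec1 D [set x] - vec1 D [set y] <= bd K D 2)%MS)).
  by move=> z; rewrite subrr sub0mx.
move=> a b c eab hbc.
rewrite (_ : _ - _ = (vec1 D [set a] - vec1 D [set b]) + (vec1 D [set b] - vec1 D [set c]));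
  last by rewrite addrA subrK.
apply: addmx_sub => //.
case: (eqVneq a b) => [->|ab]; first by rewrite subrr sub0mx.
have hE : [set a; b] \in faces_sz D 2 by rewrite faces_szP cards2 ab andbT; exact: eab.
pose p := Ordinal (etrans (index_mem _ _) hE).
have hp : nth set0 (faces_sz D 2) p = [set a; b] by rewrite nth_index.
have := row_sub p (bd K D 2); rewrite (row_bd2 hp ab) => h.
rewrite -[X in (X <= _)%MS]scale1r -(sign2 (pos [set a; b] b)) -scalerA.
exact: scalemx_sub.
Qed.

Lemma hv0 D : set0 \in D ->
  (forall x y, [set x] \in D -> [set y] \in D -> connect (edg D) x y) ->
  hvanish K D 0.
Proof.
move=> h0 hc /=.
apply/row_subP => i; set u := row i _.
have hu : u *m bd K D 1 = 0 by apply/sub_kermxP; exact: row_sub.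
have hsing (q : 'I_(size (faces_sz D 1))) : exists x, nth set0 (faces_sz D 1) q = [set x] /\ [set x] \in D.
  have [hD /eqP /cards1P [x hx]] := nth_faces q.
  by exists x; rewrite -hx.
have ue : u = \sum_q u 0 q *: vec1 D (nth set0 (faces_sz D 1) q).
  apply/rowP => r; rewrite summxE (bigD1 r) //= big1 ?addr0.
    by rewrite [in RHS]mxE [X in _ * X]mxE eqxx mulr1.
  move=> q qr; rewrite !mxE nth_uniq ?uniq_faces //.
  by case: eqP => [/ord_inj rq|_]; [rewrite rq eqxx in qr | rewrite mulr0].
case: (pickP (fun _ : 'I_(size (faces_sz D 1)) => true)) => [q0 _|none]; last first.
  by rewrite ue big1 ?sub0mx // => q; have := none q.
have [x0 [hx0 hx0D]] := hsing q0.
rewrite ue (_ : \sum_q _ = \sum_q u 0 q *: (vec1 D (nth set0 (faces_sz D 1) q) - vec1 D [set x0])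
   + (\sum_q u 0 q) *: vec1 D [set x0]); last first.
  by rewrite scaler_suml -big_split /=; apply: eq_bigr => q _; rewrite scalerBr subrK.
have -> : \sum_q u 0 q = 0.
  have hs0 : set0 \in faces_sz D 0 by rewrite faces_szP h0 cards0.
  have ht : (0 < size (faces_sz D 0))%N by rewrite -has_predT; apply/hasP; exists set0.
  have := congr1 (fun M : 'M[K]_(1, size (cols D 1)) => M 0 (Ordinal ht : 'I_(size (cols D 1)))) hu; rewrite bd1_const mxE => h.
  rewrite mxE in h; apply: (etrans _ h); apply: eq_bigr => q _; by rewrite !mxE mulr1.
rewrite scale0r addr0; apply: summx_sub => q _; apply: scalemx_sub.
have [x [hx hxD]] := hsing q; rewrite hx; exact: vec1_diff_sub (hc _ _ hxD hx0D).
Qed.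

Lemma sub_const1 k l m (M : 'M[K]_(k, m)) (B : 'M_(l, m)) p :
  (m <= 1)%N -> row p B = const_mx 1 -> (M <= B)%MS.
Proof.
move=> hm hr; apply/row_subP => i; move: (row i M) => w.
move: B w hr hm; case: m {M} => [|[|m]] B w hr hm //.
  by rewrite thinmx0 sub0mx.
have -> : w = w 0 0 *: row p B by apply/rowP => z; rewrite ord1 hr !mxE mulr1.
by apply: scalemx_sub; apply: row_sub.
Qed.

Lemma hvm1 D x : [set x] \in D -> hvanish K D (Negz 0).
Proof.
move=> hx /=.
have hm : (size (faces_sz D 0) <= 1)%N.
  rewrite /faces_sz -cardE; apply: (@leq_trans #|[set set0 : {set T}]|); last by rewrite cards1.
  apply: subset_leq_card; apply/subsetP => F; rewrite !inE => /andP[_].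
  by rewrite cards_eq0.
have hq : [set x] \in faces_sz D 1 by rewrite faces_szP hx cards1.
pose p := Ordinal (etrans (index_mem _ _) hq).
apply: (@sub_const1 _ _ (size (faces_sz D 0)) (kermx (bd K D 0)) (bd K D 1) p hm).
by rewrite bd1_const; apply/rowP => z; rewrite !mxE.
Qed.

Lemma exists_set1 (a : T) (P : pred T) : [exists z in [set a], P z] = P a.
Proof.
apply/existsP/idP => [[z]|pa]; first by rewrite inE => /andP[/eqP -> ].
by exists a; rewrite inE eqxx.
Qed.

Lemma hv0neg D u v : set0 \in D -> closedc D -> [set u] \in D -> [set v] \in D ->
  ~~ connect (edg D) u v -> ~ hvanish K D 0.
Proof.
move=> h0 hcl hu hv nc /= hk.
have esym : symmetric (edg D) by move=> a b; rewrite /edg setUC.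
set c := vec1 D [set u] - vec1 D [set v].
have huV : [set u] \in faces_sz D 1 by rewrite faces_szP hu cards1.
have hvV : [set v] \in faces_sz D 1 by rewrite faces_szP hv cards1.
have hck : (c <= kermx (bd K D 1))%MS.
  by apply/sub_kermxP; rewrite bd1_const mulmxBl !vec1_const huV hvV subrr.
have /submxP [w hw] := submx_trans hck hk.
pose phi := fun t : {set T} => ([exists z in t, connect (edg D) u z])%:R : K.
pose f : 'cV[K]_(size (faces_sz D 1)) := \col_q phi (nth set0 (faces_sz D 1) q).
have hfq q : f q 0 = phi (nth set0 (faces_sz D 1) q) by rewrite mxE.
have hf : bd K D 2 *m f = 0.
  apply/matrixP => p z; rewrite ord1 [RHS]mxE.
  have -> : (bd K D 2 *m f) p 0 = (row p (bd K D 2) *m f) 0 0 by rewrite -row_mul [RHS]mxE.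
  have [hE /eqP /cards2P [a [b [ab hab]]]] := nth_faces p.
  rewrite (row_bd2 hab ab) -scalemxAl mulmxBl mxscaleE mxsubE !(vec1_mul _ hfq).
  rewrite hab in hE.
  have haV : [set a] \in faces_sz D 1.
    by rewrite faces_szP cards1 eqxx andbT; apply: hcl hE _; rewrite sub1set !inE eqxx.
  have hbV : [set b] \in faces_sz D 1.
    by rewrite faces_szP cards1 eqxx andbT; apply: hcl hE _; rewrite sub1set !inE eqxx orbT.
  rewrite haV hbV /phi !exists_set1.
  have -> : connect (edg D) u a = connect (edg D) u b.
    apply/idP/idP => h; apply: connect_trans h _; apply: connect1; first exact: hE.
    by rewrite esym.
  by rewrite subrr mulr0.
have := congr1 (fun M => (M *m f) 0 0) hw; rewrite /= -mulmxA hf mulmx0 [X in _ = X]mxE.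
rewrite /c mulmxBl mxsubE !(vec1_mul _ hfq) huV hvV.
rewrite /phi !exists_set1 connect0 (negbTE nc) /= mulr0 subr0 mulr1.
by move/eqP; rewrite oner_eq0.
Qed.

Lemma lk0 D : lk D set0 = D.
Proof.
apply/setP => H; rewrite !inE setU0.
rewrite (_ : [disjoint H & set0]) ?andbT ?andbb //.
by rewrite disjoints_subset setC0 subsetT.
Qed.

Lemma dimc_gt D m : (Posz m < dimc D) -> exists2 H, H \in D & (m.+2 <= #|H|)%N.
Proof.
rewrite /dimc; set M := (\max_(F in D) #|F|)%N => h.
have hM : (m.+2 <= M)%N.
  by move: h; lia.
case: (boolP [exists H in D, m.+2 <= #|H|]%N) => [/exists_inP [H HD hH]|/exists_inP hn].
  by exists H.
exfalso; suff : (M <= m.+1)%N by rewrite leqNgt hM.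
apply/bigmax_leqP => F FD; rewrite leqNgt; apply/negP => h'; apply: hn; by exists F.
Qed.

Lemma dimc_m1 D : (Negz 0 < dimc D) -> exists2 H, H \in D & (1 <= #|H|)%N.
Proof.
rewrite /dimc; set M := (\max_(F in D) #|F|)%N => h.
have hM : (1 <= M)%N.
  by move: h; lia.
case: (boolP [exists H in D, 1 <= #|H|]%N) => [/exists_inP [H HD hH]|/exists_inP hn].
  by exists H.
exfalso; suff : (M <= 0)%N by rewrite leqNgt hM.
apply/bigmax_leqP => F FD; rewrite leqNgt; apply/negP => h'; apply: hn; by exists F.
Qed.

Lemma dimc_ge D H m : H \in D -> (m.+2 <= #|H|)%N -> (Posz m < dimc D).
Proof.
move=> HD hH; rewrite /dimc.
have : (#|H| <= \max_(F in D) #|F|)%N by exact: (@leq_bigmax_cond _ (fun F => F \in D) (fun F => #|F|) H HD).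
move: hH; lia.
Qed.

Lemma closed_lk D F : closedc D -> closedc (lk D F).
Proof.
move=> hcl H H' /[!inE] /and3P [HD dHF HFD] sH; rewrite (hcl _ _ HD sH).
rewrite (disjointWl sH dHF) /=; apply: hcl HFD _; exact: setSU.
Qed.

Lemma closed_del D F : closedc D -> closedc (del D F).
Proof.
move=> hcl H H' /[!inE] /andP [HD dHF] sH; rewrite (hcl _ _ HD sH).
exact: (disjointWl sH dHF).
Qed.

Lemma cards_disj (A B : {set T}) : [disjoint A & B] -> #|A :|: B| = (#|A| + #|B|)%N.
Proof. by move=> d; rewrite cardsU (disjoint_setI0 d) cards0 subn0. Qed.

Lemma CM_dim1 D : closedc D -> (forall H, H \in D -> #|H| <= 2)%N ->
  ((exists2 H, H \in D & #|H| = 2%N) ->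
     forall x y, [set x] \in D -> [set y] \in D -> connect (edg D) x y) ->
  CM K D.
Proof.
move=> hcl hsz hcon F FD i hi.
case: i hi => [m|[|m]] hi //.
  have [H /[!inE] /and3P [HD dHF HFD] hH] := dimc_gt hi.
  have := hsz _ HFD; rewrite cards_disj //.
  case: m hH hi => [|m] hH hi; last by move=> h; have := leq_trans hH (leq_trans (leq_addr _ _) h).
  move=> h.
  have hF : #|F| = 0%N by apply/eqP; rewrite -leqn0 -(leq_add2l #|H|) addn0; exact: leq_trans h _.
  move/eqP: hF; rewrite cards_eq0 => /eqP hF; subst F; rewrite lk0.
  apply: hv0 => //; apply: hcon; exists H => //.
  by apply/eqP; rewrite eqn_leq hsz.
have [H HL hH] := dimc_m1 hi.
have [x xH] : exists x, x \in H by apply/card_gt0P.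
apply: (@hvm1 _ x); apply: (closed_lk hcl HL); by rewrite sub1set.
Qed.

Lemma CM_neg D H u v : closedc D -> H \in D -> (2 <= #|H|)%N -> [set u] \in D -> [set v] \in D ->
  ~~ connect (edg D) u v -> ~ CM K D.
Proof.
move=> hcl HD hH uD vD nc hCM.
have h0 : set0 \in D by apply: hcl HD (sub0set _).
have := hCM set0 h0 0; rewrite lk0 => h.
exact: hv0neg h0 hcl uD vD nc (h (dimc_ge (m := 0) HD hH)).
Qed.

Lemma S2_dim1 D : closedc D -> (forall H, H \in D -> #|H| <= 2)%N -> connectedc D -> S2 D.
Proof.
move=> hcl hsz hcon F FD hi.
have hi' : Posz 0 < dimc (lk D F) by [].
have [H /[!inE] /and3P [HD dHF HFD] hH] := dimc_gt hi'.
have := hsz _ HFD; rewrite cards_disj // => h.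
have hF : #|F| = 0%N by apply/eqP; rewrite -leqn0 -(leq_add2l #|H|) addn0; exact: leq_trans h _.
by move/eqP: hF; rewrite cards_eq0 => /eqP hF; subst F; rewrite lk0.
Qed.

Lemma S2_neg D H u v : closedc D -> H \in D -> (2 <= #|H|)%N -> [set u] \in D -> [set v] \in D ->
  ~~ connect (edg D) u v -> ~ S2 D.
Proof.
move=> hcl HD hH uD vD nc hS.
have h0 : set0 \in D by apply: hcl HD (sub0set _).
have := hS set0 h0; rewrite lk0 => hc.
have {}hc := hc (dimc_ge (m := 0) HD hH).
by move: nc; rewrite (hc u v uD vD).
Qed.

Lemma edg_sym D : symmetric (edg D).
Proof. by move=> a b; rewrite /edg setUC. Qed.

Lemma facet_above D F : F \in D -> exists2 H, H \in facets D & F \subset H.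
Proof.
move=> FD; pose P := [pred H | (H \in D) && (F \subset H)].
have PF : P F by rewrite /= FD subxx.
case: (@arg_maxnP _ F P (fun H => #|H|) PF) => H /andP[HD FH] hmax.
exists H => //; rewrite inE HD; apply/forall_inP => H' H'D; apply/implyP => HH'.
rewrite eq_sym eqEcard HH' /=; apply: hmax; by rewrite /= H'D (subset_trans FH HH').
Qed.

Lemma facet_in D F : F \in facets D -> F \in D.
Proof. by rewrite inE => /andP[]. Qed.

Lemma edge_of D F a b : closedc D -> F \in D -> a \in F -> b \in F -> edg D a b.
Proof. by move=> hcl FD aF bF; apply: hcl FD _; rewrite subUset !sub1set aF bF. Qed.

Lemma other_elt (F : {set T}) (w : T) : (2 <= #|F|)%N -> exists2 y, y \in F & y != w.
Proof.
case/card_gt1P => a [b [aF bF ab]].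
case: (eqVneq a w) => [aw|aw]; last by exists a.
by exists b => //; rewrite -aw eq_sym.
Qed.

Lemma conn_all D x : (forall w, [set w] \in D -> connect (edg D) x w) ->
  forall u v, [set u] \in D -> [set v] \in D -> connect (edg D) u v.
Proof.
move=> h u v uD vD; apply: connect_trans (h v vD).
by rewrite (sym_connect_sym (@edg_sym D)); apply: h.
Qed.

Lemma vdec_conn D : vdec D -> closedc D -> (exists2 F, F \in D & 2 <= #|F|)%N ->
  forall u v, [set u] \in D -> [set v] \in D -> connect (edg D) u v.
Proof.
elim => [F|{}D x pD xD _ _ _ IHdel] hcl [B BD hB].
  move=> u v; rewrite !powersetE !sub1set => uF vF; apply: connect1.
  by rewrite /edg powersetE subUset !sub1set uF vF.
have [FB FBf BFB] := facet_above BD.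
have hbig w : [set w] \in D -> exists2 F, F \in D & (w \in F) && (2 <= #|F|)%N.
  move=> wD; have [Fw Fwf wFw] := facet_above wD.
  exists Fw; first exact: facet_in Fwf.
  rewrite -sub1set wFw (pD _ _ Fwf FBf); exact: leq_trans hB (subset_leq_card BFB).
have hdelD H : H \in del D [set x] -> H \in D by rewrite inE => /andP[].
have hsub : forall a b, connect (edg (del D [set x])) a b -> connect (edg D) a b.
  apply: connect_sub => a b hab; apply: connect1; exact: hdelD.
apply: (@conn_all _ x) => w wD.
case: (eqVneq w x) => [->|wx]; first exact: connect0.
have wdel : [set w] \in del D [set x] by rewrite inE wD disjoints1 inE.
case: (boolP [exists F in del D [set x], 2 <= #|F|]%N) => [/exists_inP [F Fd hF]|/exists_inP hn].
  have [Fx Fxd /andP [xFx hFx]] := hbig x xD.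
  have [y yF yx] := other_elt x hFx.
  have ydel : [set y] \in del D [set x].
    by rewrite inE (hcl _ _ Fxd) ?sub1set // disjoints1 inE.
  apply: (@connect_trans _ _ y); first by apply: connect1; exact: (edge_of hcl Fxd).
  apply: hsub; apply: IHdel ydel wdel; first exact: closed_del.
  by exists F.
have [Fw FwD /andP [wFw hFw]] := hbig w wD.
have xFw : x \in Fw.
  apply/negPn/negP => xn; apply: hn; exists Fw => //.
  by rewrite inE FwD disjoint_sym disjoints1.
by apply: connect1; exact: (edge_of hcl FwD).
Qed.

Lemma shell_conn D : shellable D -> closedc D -> (exists2 F, F \in D & 2 <= #|F|)%N ->
  forall u v, [set u] \in D -> [set v] \in D -> connect (edg D) u v.
Proof.
case=> pD [s [hperm hsh]] hcl [B BD hB].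
have mem_s F : (F \in s) = (F \in facets D) by rewrite (perm_mem hperm) mem_enum.
have [FB FBf BFB] := facet_above BD.
have hm : (2 <= #|FB|)%N by exact: leq_trans hB (subset_leq_card BFB).
have szs k : (k < size s)%N -> #|nth set0 s k| = #|FB| /\ nth set0 s k \in D.
  move=> ks; have : nth set0 s k \in facets D by rewrite -mem_s mem_nth.
  by move=> h; split; [apply: pD|apply: facet_in].
have s0 : (0 < size s)%N by rewrite -has_predT; apply/hasP; exists FB; rewrite ?mem_s.
have [y0 y0s] : exists y0, y0 \in nth set0 s 0.
  by apply/card_gt0P; rewrite (szs 0%N s0).1; exact: leq_trans _ hm.
have claim : forall i k, (k <= i)%N -> (k < size s)%N -> forall z, z \in nth set0 s k ->
    connect (edg D) y0 z.
  elim=> [|i IH] k ki ks z zs.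
    move: ki; rewrite leqn0 => /eqP kz; subst k.
    apply: connect1; exact: (edge_of hcl (szs 0%N s0).2).
  case: (posnP k) => [kz|kpos].
    subst k; apply: connect1; exact: (edge_of hcl (szs 0%N s0).2).
  have hk0 : (0 < k < size s)%N by rewrite kpos ks.
  have [x _ [k' k'k hk']] := hsh k 0%N hk0.
  have [w ws wx] := other_elt x (leq_trans hm (eq_leq (esym (szs k ks).1))).
  have wk' : w \in nth set0 s k'.
    apply/negPn/negP => wn; move: wx; suff : w \in [set x] by rewrite inE => ->.
    by rewrite -hk' inE wn.
  have k's : (k' < size s)%N by exact: ltn_trans k'k ks.
  apply: connect_trans (IH k' _ k's w wk') _; first by move: ki k'k; lia.
  apply: connect1; exact: (edge_of hcl (szs k ks).2).
apply: (@conn_all _ y0) => w wD.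
have [Fw Fwf wFw] := facet_above wD.
have Fws : Fw \in s by rewrite mem_s.
have hi := Fws; rewrite -index_mem in hi.
apply: (claim _ _ (leqnn _) hi); rewrite nth_index // -sub1set //.
Qed.

Lemma CM_pair D a b : closedc D -> (forall H, H \in D -> H \subset [set a; b]) -> CM K D.
Proof.
move=> hcl hab; apply: CM_dim1 => //.
  move=> H HD; apply: leq_trans (subset_leq_card (hab _ HD)) _.
  by rewrite cards2; case: (a != b).
case=> H HD h2 x y xD yD.
have eH : H = [set a; b].
  apply/eqP; rewrite eqEcard hab //= h2 cards2; by case: (a != b).
have xH : x \in H by rewrite eH -sub1set; exact: hab.
have yH : y \in H by rewrite eH -sub1set; exact: hab.
apply: connect1; exact: (edge_of hcl HD).
Qed.

Lemma closed_skel D i : closedc (skel D i).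
Proof.
move=> F F' /[!inE] /exists_inP [H HD /andP [hH FH]] sF.
by apply/exists_inP; exists H => //; rewrite hH (subset_trans sF FH).
Qed.

Lemma skel_sub D i : closedc D -> forall F, F \in skel D i -> F \in D.
Proof. by move=> hcl F /[!inE] /exists_inP [H HD /andP [_ FH]]; exact: hcl HD FH. Qed.

Lemma seqCM_dim1 D : closedc D -> (forall H, H \in D -> #|H| <= 2)%N -> connectedc D ->
  seqCM K D.
Proof.
move=> hcl hsz hcon i; apply: CM_dim1; first exact: closed_skel.
  by move=> H /(skel_sub hcl); exact: hsz.
case=> H' /[!inE] /exists_inP [H HD /andP [/eqP hH H'H]] h2 x y xS yS.
have hi : i = 1%N.
  have := subset_leq_card H'H; have := hsz _ HD; rewrite h2 hH; lia.
subst i.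
have := hcon x y (skel_sub hcl xS) (skel_sub hcl yS).
apply: connect_sub => a b hab; case: (eqVneq a b) => [->|ab]; first exact: connect0.
apply: connect1; rewrite /edg inE; apply/exists_inP; exists [set a; b] => //.
by rewrite cards2 ab subxx.
Qed.

Lemma seqCM_neg D Eu Ev u v : closedc D -> Eu \in D -> #|Eu| = 2%N -> u \in Eu ->
  Ev \in D -> #|Ev| = 2%N -> v \in Ev -> ~~ connect (edg D) u v -> ~ seqCM K D.
Proof.
move=> hcl EuD hEu uE EvD hEv vE nc hs.
have inS (F E : {set T}) : E \in D -> #|E| = 2%N -> F \subset E -> F \in skel D 1.
  by move=> ED hE FE; rewrite inE; apply/exists_inP; exists E => //; rewrite hE FE.
apply: (@CM_neg (skel D 1) Eu u v (@closed_skel D 1) (inS _ _ EuD hEu (subxx _))).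
- by rewrite hEu.
- by apply: inS EuD hEu _; rewrite sub1set.
- by apply: inS EvD hEv _; rewrite sub1set.
- apply/negP => h; move/negP: nc; apply; move: h; apply: connect_sub => a b hab.
  apply: connect1; exact: (skel_sub hcl hab).
- exact: hs.
Qed.

Lemma shell1 D (s : seq {set T}) : pure D -> perm_eq s (enum (facets D)) ->
  (forall i, (i < size s)%N -> #|nth set0 s i| = 2%N) ->
  (forall i, (0 < i < size s)%N -> exists2 k, (k < i)%N & exists y z,
      [/\ nth set0 s i = [set y; z], y \in nth set0 s k & z \notin nth set0 s k]) ->
  shellable D.
Proof.
move=> pD hp h2 hadj; split => //; exists s; split => // i j /andP [ji his].
have us : uniq s by rewrite (perm_uniq hp) enum_uniq.
have hi0 : (0 < i < size s)%N by rewrite his (leq_ltn_trans (leq0n j) ji).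
have [k ki [y [z [hi yk zk]]]] := hadj i hi0.
have yz : y != z.
  apply/negP => /eqP e; have := h2 i his; rewrite hi e setUid cards1 //.
have hk : nth set0 s i :\: nth set0 s k = [set z].
  apply/setP => w; rewrite !inE hi !inE.
  case: (eqVneq w z) => [->|wz]; first by rewrite zk orbT.
  by case: (eqVneq w y) => [->|wy]; rewrite ?yk ?andbF.
case: (boolP (z \in nth set0 s j)) => zj; last first.
  exists z; first by rewrite inE zj hi !inE eqxx orbT.
  by exists k.
have js : (j < size s)%N by exact: ltn_trans ji his.
have yj : y \notin nth set0 s j.
  apply/negP => yj.
  have e : nth set0 s j = nth set0 s i.
    apply/esym/eqP; rewrite eqEcard hi subUset !sub1set yj zj /= -hi h2 // h2 //.
  by move/eqP: e; rewrite nth_uniq // => /eqP e; rewrite e ltnn in ji.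
exists y; first by rewrite inE yj hi !inE eqxx.
exists j => //; apply/setP => w; rewrite !inE hi !inE.
case: (eqVneq w y) => [->|wy] /=; first by rewrite (negbTE yj).
by case: (eqVneq w z) => [->|wz]; rewrite ?zj ?andbF ?andbT //=; rewrite (negbTE wy) (negbTE wz).
Qed.

Lemma closed_indep (V : {set T}) (e : rel T) : closedc (indep_complex V e).
Proof.
move=> F H /[!inE] /andP [FV /forall_inP hF] sH; apply/andP; split.
  exact: subset_trans sH FV.
apply/forall_inP => x xH; apply/forall_inP => y yH.
by move/forall_inP: (hF x (subsetP sH _ xH)) => /(_ y (subsetP sH _ yH)).
Qed.

Lemma facet_max D F E : F \in facets D -> E \in D -> F \subset E -> E = F.
Proof. by rewrite inE => /andP [_ /forall_inP h] ED FE; apply/eqP; move/implyP: (h E ED); apply. Qed.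

Lemma pure_of D k : (forall F, F \in D -> #|F| <= k)%N ->
  (forall F, F \in D -> exists2 E, E \in D & (F \subset E) && (#|E| == k)) -> pure D.
Proof.
move=> hle hex.
have hk F : F \in facets D -> #|F| = k.
  move=> Ff; have [E ED /andP [FE /eqP <-]] := hex F (facet_in Ff).
  by rewrite (facet_max Ff ED FE).
by move=> F H /hk -> /hk ->.
Qed.

Lemma facets_big D E k : (forall F, F \in D -> #|F| <= k)%N -> E \in D -> #|E| = k ->
  E \in facets D.
Proof.
move=> hle ED hE; rewrite inE ED; apply/forall_inP => H HD; apply/implyP => EH.
by rewrite eq_sym eqEcard EH hE hle.
Qed.

Lemma vdec_two (p q : T) : p != q -> vdec (powerset [set p] :|: powerset [set q]).
Proof.
move=> pq; set Q := _ :|: _.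
have inQ A : (A \in Q) = (A \subset [set p]) || (A \subset [set q]) by rewrite !inE ?powersetE.
apply: (@vdec_step _ Q p).
- apply: (@pure_of _ 1) => F; rewrite inQ => /orP [] h.
  + by apply: leq_trans (subset_leq_card h) _; rewrite cards1.
  + by apply: leq_trans (subset_leq_card h) _; rewrite cards1.
  + by exists [set p]; rewrite ?inQ ?subxx ?h ?cards1.
  + by exists [set q]; rewrite ?inQ ?subxx ?h ?cards1 ?orbT.
- by rewrite inQ subxx.
- have -> : lk Q [set p] = powerset set0.
    apply/setP => A; rewrite powerset0 !inE ?powersetE; apply/idP/idP.
      case/and3P => _ dA; rewrite ?powersetE => /orP [] h.
        apply/eqP; apply/setP => x; rewrite inE; apply/negP => xA.
        have : x \in [set p] by apply: (subsetP h); rewrite inE xA.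
        by rewrite inE => /eqP ex; subst x; move: dA; rewrite disjoint_sym disjoints1 xA.
      have : p \in [set q] by apply: (subsetP h); rewrite !inE eqxx orbT.
      by rewrite inE (negbTE pq).
    move/eqP ->; rewrite sub0set set0U subxx /= andbT.
    by rewrite disjoint_sym disjoints1 inE.
  exact: vdec_simplex.
- have -> : del Q [set p] = powerset [set q].
    apply/setP => A; rewrite !inE ?powersetE; apply/idP/idP.
      case/andP => /orP [] h dA //; apply/subsetP => x xA.
      have := subsetP h x xA; rewrite inE => /eqP ex; subst x.
      by move: dA; rewrite disjoint_sym disjoints1 xA.
    move=> h; rewrite h orbT /= disjoint_sym disjoints1.
    apply/negP => pA; have := subsetP h p pA; rewrite inE eq_sym => e; by rewrite (eqP e) eqxx in pq.
  exact: vdec_simplex.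
Qed.
End Hom.

Local Close Scope ring_scope.

Section Circ.
Variables (n j : nat).
Hypotheses (hn : 4 <= n) (hj1 : 1 <= j) (hj2 : j.*2 <= n).

Definition Sc := fun d => (1 <= d <= n./2) && (d != j).
Local Notation G := (circulant n Sc).
Local Notation D := (indep_complex [set: 'I_n] G).

Definition compN (x y : nat) := [|| y == x + j, y + n == x + j, x == y + j | x + n == y + j].

Lemma half_bounds : (n./2).*2 <= n <= (n./2).*2 + 1.
Proof. have := odd_double_half n; case: (odd n) => /= <-; lia. Qed.

Lemma Gadj (a b : 'I_n) : G a b = (a != b) && ~~ compN a b.
Proof.
have ha := ltn_ord a; have hb := ltn_ord b; have hh := half_bounds.
rewrite /circulant /Sc /compN; move: (n./2) hh => h hh.
rewrite -val_eqE /=; apply/idP/idP; lia.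
Qed.

Definition indepN (A : {set 'I_n}) :=
  forall x y : 'I_n, x \in A -> y \in A -> x != y -> compN x y.

Lemma inDP A : reflect (indepN A) (A \in D).
Proof.
rewrite inE /independent subsetT /=.
apply: (iffP forall_inP) => [h x y xA yA xy|h x xA].
  by move/forall_inP: (h x xA) => /(_ y yA); rewrite Gadj xy /= negbK.
apply/forall_inP => y yA; rewrite Gadj negb_and negbK.
by case: (eqVneq x y) => //= xy; rewrite negbK; exact: h xA yA xy.
Qed.

Lemma closedD : closedc D.
Proof.
move=> F H /inDP hF sH; apply/inDP => x y xH yH; apply: hF; exact: (subsetP sH).
Qed.

Lemma compN_sym x y : compN x y = compN y x.
Proof. rewrite /compN; apply/idP/idP; lia. Qed.

Definition sgv (x : nat) := if x + j < n then x + j else x + j - n.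
Lemma sgvE x : (sgv x = x + j /\ x + j < n) \/ (sgv x = x + j - n /\ n <= x + j).
Proof. rewrite /sgv; case: ifP => h; [left|right]; lia. Qed.
Lemma sgv_lt (x : 'I_n) : sgv x < n.
Proof. have := ltn_ord x; have := sgvE x; lia. Qed.
Definition sgo (x : 'I_n) : 'I_n := Ordinal (sgv_lt x).
Lemma comp_sgo (x : 'I_n) : compN x (sgo x).
Proof. have := ltn_ord x; have := sgvE x; rewrite /compN /=; lia. Qed.

Definition tgv (x : nat) := if j <= x then x - j else x + n - j.
Lemma tgv_lt (x : 'I_n) : tgv x < n.
Proof. have := ltn_ord x; rewrite /tgv; case: ifP; lia. Qed.
Definition tgo (x : 'I_n) : 'I_n := Ordinal (tgv_lt x).

Lemma comp_nbr (x y : 'I_n) : compN x y -> y = sgo x \/ y = tgo x.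
Proof.
have := ltn_ord x; have := ltn_ord y; have := sgvE x.
rewrite /compN => h1 h2 h3 h4.
have : (y : nat) = sgv x \/ (y : nat) = tgv x by move: h1 h2 h3 h4; rewrite /tgv; case: ifP; lia.
by case=> h; [left|right]; apply: val_inj.
Qed.

Lemma single_in (x : 'I_n) : [set x] \in D.
Proof. by apply/inDP => a b /[!inE] /eqP -> /eqP ->; rewrite eqxx. Qed.

Lemma pair_in (x y : 'I_n) : compN x y -> [set x; y] \in D.
Proof.
move=> c; apply/inDP => a b /[!inE] /orP [] /eqP -> /orP [] /eqP -> //; rewrite ?eqxx //.
by rewrite compN_sym.
Qed.


Lemma buchs (K : fieldType) : buchsbaum K [set: 'I_n] G.
Proof.
move=> x _; apply: (@CM_pair _ K _ (sgo x) (tgo x)); first exact: closed_indep.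
move=> H /[!inE] /andP [HV _]; apply/subsetP => y yH.
move: (subsetP HV y yH); rewrite !inE negb_or Gadj negb_and !negbK andbT => /andP [yx].
rewrite eq_sym (negbTE yx) /= => /comp_nbr [] ->; by rewrite eqxx ?orbT.
Qed.

Lemma comp_lt (x y : 'I_n) : compN x y -> x != y.
Proof. have := ltn_ord x; have := ltn_ord y; rewrite -val_eqE /compN /=; lia. Qed.

Lemma tri3 A : A \in D -> 2 < #|A| -> 3 * j = n.
Proof.
move=> /inDP hA /card_gt2P [x [y [z [[xA yA zA] [xy yz zx]]]]].
have c1 := hA _ _ xA yA xy; have c2 := hA _ _ yA zA yz; have c3 := hA _ _ zA xA zx.
move: c1 c2 c3 xy yz zx (ltn_ord x) (ltn_ord y) (ltn_ord z); rewrite -!val_eqE /compN /=; lia.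
Qed.

Lemma no4 A : A \in D -> 3 < #|A| -> False.
Proof.
move=> hA' h; have hA := hA'; move/inDP: hA.
have [x xA] : exists x, x \in A by apply/card_gt0P; lia.
have : 2 < #|A :\ x| by move: h; rewrite (cardsD1 x A) xA; lia.
case/card_gt2P => [y [z [w [[yA zA wA] [yz zw wy]]]]].
move: yA zA wA; rewrite !inE => /andP [yx yA] /andP [zx zA] /andP [wx wA] hA.
have c1 := hA _ _ xA yA (ltac:(by rewrite eq_sym)).
have c2 := hA _ _ xA zA (ltac:(by rewrite eq_sym)).
have c3 := hA _ _ xA wA (ltac:(by rewrite eq_sym)).
move: c1 c2 c3 yz zw wy (ltn_ord x) (ltn_ord y) (ltn_ord z) (ltn_ord w); rewrite -!val_eqE /compN /=; lia.
Qed.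

Lemma triple_in (x y z : 'I_n) : compN x y -> compN y z -> compN x z -> [set x; y; z] \in D.
Proof.
move=> c1 c2 c3; apply/inDP => a b /[!inE] ha hb ab.
have cs u v : compN u v -> compN v u by rewrite compN_sym.
by move: ha hb ab => /orP [/orP [] /eqP ->|/eqP ->] /orP [/orP [] /eqP ->|/eqP ->];
  rewrite ?eqxx //; auto.
Qed.

Definition wsz := if 3 * j == n then 3 else 2.

Lemma extend A : A \in D -> #|A| < wsz -> exists2 y, y \notin A & y |: A \in D.
Proof.
move=> AD hs.
have n0 : 0 < n by lia.
case: (posnP #|A|) => [/eqP|A0].
  rewrite cards_eq0 => /eqP ->; exists (Ordinal n0); first by rewrite inE.
  by rewrite setU0 single_in.
case: (eqVneq #|A| 1) => [/eqP /cards1P [a ->]|A1].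
  exists (sgo a); first by rewrite inE eq_sym comp_lt // comp_sgo.
  by rewrite pair_in // compN_sym comp_sgo.
have A2 : #|A| = 2 by move: hs A1 A0; rewrite /wsz; case: ifP; lia.
have j3 : 3 * j = n by move: hs; rewrite A2 /wsz; case: eqP => // ->.
move/eqP: A2 => /cards2P [a [b [ab eA]]]; subst A.
have cab : compN a b by move/inDP: AD; apply; rewrite ?inE ?eqxx ?orbT.
have ha := ltn_ord a; have hb := ltn_ord b.
have sa := sgvE a; have sb := sgvE b; have hsa := sgv_lt a; have hsb := sgv_lt b.
have [y [cya cyb yna ynb]] : exists y : 'I_n, [/\ compN y a, compN y b, y != a & y != b].
  case: (boolP ((b : nat) == sgv a)) => e.
    exists (sgo b); rewrite -!val_eqE /=; move: cab e; rewrite /compN => cab e; split; lia.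
  exists (sgo a); rewrite -!val_eqE /=; move: cab e; rewrite /compN => cab e; split; lia.
exists y; first by rewrite !inE negb_or yna ynb.
rewrite (_ : y |: [set a; b] = [set y; a; b]); last by apply/setP => u; rewrite !inE orbA.
apply: triple_in => //; by rewrite compN_sym.
Qed.

Lemma max_card A : max_independent [set: 'I_n] G A -> #|A| = wsz.
Proof.
case=> hA hmax; have AD : A \in D by rewrite inE.
case: (ltngtP #|A| wsz) => // h.
  have [y yA yD] := extend AD h.
  have e := hmax (y |: A); move: yD; rewrite inE => /e; rewrite subsetUr => /(_ isT) e'.
  by move: yA; rewrite -e' in_setU1 eqxx.
exfalso; move: h; rewrite /wsz; case: eqP => h3 h.
  exact: no4 AD h.
by have := tri3 AD h.
Qed.

Lemma wcov : well_covered [set: 'I_n] G.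
Proof. by move=> A B hA hB; rewrite !max_card. Qed.

Lemma k4 : (n %/ gcdn n j == 4) = (4 * j == n).
Proof.
have g0 : 0 < gcdn n j by rewrite gcdn_gt0; lia.
apply/eqP/eqP => h.
  have gj := dvdn_gcdr n j; have gn := dvdn_gcdl n j.
  have [t ht] := dvdnP gj.
  have hn4 : n = 4 * gcdn n j by rewrite -{1}(divnK gn) h mulnC.
  have e : gcdn (4 * gcdn n j) (t * gcdn n j) = gcdn n j by rewrite -hn4 -ht.
  move: e; rewrite -muln_gcdl.
  move: (gcdn n j) g0 ht hn4 => g g0 ht hn4 e.
  have : t = 1 \/ t = 2 by nia.
  case=> ht'; first by lia.
  by move: e; rewrite ht' (_ : gcdn 4 2 = 2) //; lia.
by rewrite -h gcdnC gcdnMl mulnK //; lia.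
Qed.

Lemma in2N (x u v : 'I_n) : (x \in [set u; v]) = ((x : nat) == u) || ((x : nat) == v).
Proof. by rewrite !inE. Qed.

Lemma disj_false (T : finType) (A B : {set T}) x : [disjoint A & B] -> x \in A -> x \in B -> False.
Proof.
move/disjoint_setI0 => h xA xB; have : x \in A :&: B by rewrite inE xA xB.
by rewrite h inE.
Qed.

Lemma cross M E1 E2 a c : induced_matching [set: 'I_n] G M -> E1 \in M -> E2 \in M ->
  E1 != E2 -> a \in E1 -> c \in E2 -> compN a c.
Proof.
case/and3P => _ /forall_inP h2 /forall_inP h3 E1M E2M E12 aE cE.
have d12 : [disjoint E1 & E2] by move/forall_inP: (h2 _ E1M) => /(_ _ E2M) /implyP; apply.
have ac : a != c by apply/eqP => e; subst c; exact: disj_false d12 aE cE.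
have acov : a \in cover M by apply/bigcupP; exists E1.
have ccov : c \in cover M by apply/bigcupP; exists E2.
have : ~~ G a c.
  apply/negP => hG; move/forall_inP: (h3 _ acov) => /(_ _ ccov) /implyP /(_ hG).
  case/exists_inP => E EM /andP [aE' cE'].
  case: (eqVneq E E1) => [eE|nE]; first by subst E; exact: disj_false d12 cE' cE.
  have dE : [disjoint E & E1] by move/forall_inP: (h2 _ EM) => /(_ _ E1M) /implyP; apply.
  exact: disj_false dE aE' aE.
by rewrite Gadj ac /= negbK.
Qed.

Lemma IM_card2 M E : induced_matching [set: 'I_n] G M -> E \in M -> #|E| = 2.
Proof. by case/and3P => /forall_inP h1 _ _ EM; case/and3P: (h1 _ EM) => _ /eqP. Qed.

Lemma nu_le M : induced_matching [set: 'I_n] G M -> #|M| <= 2 /\ (1 < #|M| -> 4 * j = n).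
Proof.
move=> hM; split.
  rewrite leqNgt; apply/negP => /card_gt2P [E1 [E2 [E3 [[h1 h2 h3] [d12 d23 d31]]]]].
  have [a aE] : exists a, a \in E1 by apply/card_gt0P; rewrite (IM_card2 hM h1).
  have [e eE] : exists e, e \in E3 by apply/card_gt0P; rewrite (IM_card2 hM h3).
  have /cards2P [c [d [cd eE2]]] : #|E2| == 2 by rewrite (IM_card2 hM h2).
  have cE2 : c \in E2 by rewrite eE2 !inE eqxx.
  have dE2 : d \in E2 by rewrite eE2 !inE eqxx orbT.
  have c1 := cross hM h1 h2 d12 aE cE2; have c2 := cross hM h1 h2 d12 aE dE2.
  have c3 := cross hM h1 h3 (ltac:(by rewrite eq_sym)) aE eE.
  have c4 := cross hM h2 h3 d23 cE2 eE; have c5 := cross hM h2 h3 d23 dE2 eE.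
  move: c1 c2 c3 c4 c5 cd (ltn_ord a) (ltn_ord c) (ltn_ord d) (ltn_ord e).
  rewrite -!val_eqE /compN /=; lia.
case/card_gt1P => E1 [E2 [h1 h2 d12]].
have /cards2P [a [b [ab eE1]]] : #|E1| == 2 by rewrite (IM_card2 hM h1).
have /cards2P [c [d [cd eE2]]] : #|E2| == 2 by rewrite (IM_card2 hM h2).
have aE : a \in E1 by rewrite eE1 !inE eqxx.
have bE : b \in E1 by rewrite eE1 !inE eqxx orbT.
have cE : c \in E2 by rewrite eE2 !inE eqxx.
have dE : d \in E2 by rewrite eE2 !inE eqxx orbT.
have c1 := cross hM h1 h2 d12 aE cE; have c2 := cross hM h1 h2 d12 aE dE.
have c3 := cross hM h1 h2 d12 bE cE; have c4 := cross hM h1 h2 d12 bE dE.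
move: c1 c2 c3 c4 ab cd (ltn_ord a) (ltn_ord b) (ltn_ord c) (ltn_ord d).
rewrite -!val_eqE /compN /=; lia.
Qed.

Lemma IM1 (u v : 'I_n) : G u v -> induced_matching [set: 'I_n] G [set [set u; v]].
Proof.
move=> huv; have uv : u != v by move: huv; rewrite Gadj => /andP [].
have Gs x y : G x y -> G y x by rewrite !Gadj eq_sym compN_sym.
apply/and3P; split.
- apply/forall_inP => E; rewrite inE => /eqP ->; rewrite subsetT cards2 uv /=.
  apply/forall_inP => x; rewrite !inE => /orP [] /eqP ->;
  apply/forall_inP => y; rewrite !inE => /orP [] /eqP ->; apply/implyP; rewrite ?eqxx //= => _; auto.
- by apply/forall_inP => E; rewrite inE => /eqP ->; apply/forall_inP => E'; rewrite inE => /eqP ->; rewrite eqxx.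
- rewrite cover1; apply/forall_inP => x xE; apply/forall_inP => y yE; apply/implyP => _.
  by apply/exists_inP; exists [set u; v]; [rewrite inE | rewrite xE yE].
Qed.

Lemma nu_val : nu [set: 'I_n] G = (if n %/ gcdn n j == 4 then 2 else 1).
Proof.
rewrite k4; apply/eqP; rewrite eqn_leq; apply/andP; split.
  apply/bigmax_leqP => M hM; have [h1 h2] := nu_le hM.
  case: (eqVneq (4 * j) n) => h4 //; rewrite leqNgt; apply/negP => /h2 /eqP.
  by rewrite (negbTE h4).
have h0 : 0 < n by lia.
case: (eqVneq (4 * j) n) => h4; last first.
  pose b := if j == 1 then 2 else 1.
  have hb : b < n by rewrite /b; case: ifP; lia.
  have hG : G (Ordinal h0) (Ordinal hb).
    rewrite Gadj -val_eqE /compN /= /b; case: (eqVneq j 1) => hj; lia.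
  rewrite /nu; apply: leq_trans _ (@leq_bigmax_cond _ (fun M => induced_matching [set: 'I_n] G M) (fun M => #|M|) _ (IM1 hG)).
  by rewrite cards1.
have h2 : 2 * j < n by lia.
have h3 : 3 * j < n by lia.
have hj : j < n by lia.
pose o0 := Ordinal h0; pose oj := Ordinal hj; pose o2 := Ordinal h2; pose o3 := Ordinal h3.
pose E1 := [set o0; o2]; pose E2 := [set oj; o3].
have E12 : E1 != E2.
  apply/negP => /eqP e; have : o0 \in E2 by rewrite -e !inE eqxx.
  rewrite in2N /=; lia.
have hM : induced_matching [set: 'I_n] G [set E1; E2].
  apply/and3P; split.
  - apply/forall_inP => E; rewrite !inE => /orP [] /eqP ->; rewrite subsetT cards2 -val_eqE /=;
    (apply/andP; split; first by lia);
    apply/forall_inP => x; rewrite in2N /= => hx; apply/forall_inP => y; rewrite in2N /= => hy;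
    apply/implyP; rewrite Gadj -val_eqE /compN /=; lia.
  - have dis : [disjoint E1 & E2].
      by rewrite disjoints_subset; apply/subsetP => x; rewrite in2N inE in2N /=; lia.
    apply/forall_inP => E; rewrite !inE => /orP [] /eqP ->;
    apply/forall_inP => E'; rewrite !inE => /orP [] /eqP ->; apply/implyP; rewrite ?eqxx //= => _;
    by rewrite // disjoint_sym.
  - apply/forall_inP => x /bigcupP [B1 hB1 xB]; apply/forall_inP => y /bigcupP [B2 hB2 yB].
    apply/implyP => hG.
    have E1M : E1 \in [set E1; E2] by rewrite !inE eqxx.
    have E2M : E2 \in [set E1; E2] by rewrite !inE eqxx orbT.
    move: hB1 hB2; rewrite !inE => /orP [] /eqP eB1 /orP [] /eqP eB2; subst B1 B2.
    + by apply/exists_inP; exists E1; rewrite ?xB ?yB.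
    + exfalso; move: hG xB yB; rewrite /E1 /E2 Gadj !in2N -val_eqE /compN /=; lia.
    + exfalso; move: hG xB yB; rewrite /E1 /E2 Gadj !in2N -val_eqE /compN /=; lia.
    + by apply/exists_inP; exists E2; rewrite ?xB ?yB.
rewrite /nu; apply: leq_trans _ (@leq_bigmax_cond _ (fun M => induced_matching [set: 'I_n] G M) (fun M => #|M|) _ hM).
by rewrite cards2 E12.
Qed.

Lemma D_sub_edg (x y : 'I_n) : edg D x y -> (gcdn n j %| x) = (gcdn n j %| y).
Proof.
move=> e; case: (eqVneq x y) => [->//|xy].
have c : compN x y by move/inDP: e; apply; rewrite ?inE ?eqxx ?orbT.
have gj := dvdn_gcdr n j; have gn := dvdn_gcdl n j.
move: c; rewrite /compN => /orP [/eqP e1|/orP [/eqP e1|/orP [/eqP e1|/eqP e1]]].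
- by rewrite e1 (dvdn_addl _ gj).
- by rewrite -(dvdn_addl x gj) -e1 (dvdn_addl _ gn).
- by rewrite e1 (dvdn_addl _ gj).
- by rewrite -(dvdn_addl x gn) e1 (dvdn_addl _ gj).
Qed.

Lemma conn_dvd (x y : 'I_n) : connect (edg D) x y -> (gcdn n j %| x) = (gcdn n j %| y).
Proof.
apply: (@connect_ind' _ _ (fun x y : 'I_n => (gcdn n j %| x) = (gcdn n j %| y))) => // a b c eab <-.
exact: D_sub_edg.
Qed.

Section Neg.
Hypothesis hg : gcdn n j != 1.

Let h0 : 0 < n. Proof. lia. Qed.
Let h1 : 1 < n. Proof. lia. Qed.
Let hjn : j < n. Proof. lia. Qed.
Let o0 := Ordinal h0.
Let o1 := Ordinal h1.
Let oj := Ordinal hjn.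

Lemma nc01 : ~~ connect (edg D) o0 o1.
Proof.
apply/negP => /conn_dvd /=; rewrite dvdn0 dvdn1 => h.
by move: hg; rewrite -h.
Qed.

Lemma E0_in : [set o0; oj] \in D.
Proof. by apply: pair_in; rewrite /compN /= eqxx. Qed.

Lemma E0_card : #|[set o0; oj]| = 2.
Proof. by rewrite cards2 -val_eqE /=; case: eqP => //; lia. Qed.

Lemma E1_in : [set o1; sgo o1] \in D.
Proof. by apply: pair_in; exact: comp_sgo. Qed.

Lemma E1_card : #|[set o1; sgo o1]| = 2.
Proof. by rewrite cards2 comp_lt // comp_sgo. Qed.

Lemma E0big : exists2 F, F \in D & 2 <= #|F|.
Proof. by exists [set o0; oj]; rewrite ?E0_in ?E0_card. Qed.

Lemma neg_vdec : ~ vdec D.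
Proof.
move=> hv; move/negP: nc01; apply.
exact: (vdec_conn hv closedD E0big (single_in o0) (single_in o1)).
Qed.

Lemma neg_shell : ~ shellable D.
Proof.
move=> hv; move/negP: nc01; apply.
exact: (shell_conn hv closedD E0big (single_in o0) (single_in o1)).
Qed.

Lemma neg_CM (K : fieldType) : ~ CM K D.
Proof.
apply: (CM_neg closedD E0_in _ (single_in o0) (single_in o1) nc01).
by rewrite E0_card.
Qed.

Lemma neg_S2 : ~ S2 D.
Proof.
apply: (S2_neg closedD E0_in _ (single_in o0) (single_in o1) nc01).
by rewrite E0_card.
Qed.

Lemma neg_seqCM (K : fieldType) : ~ seqCM K D.
Proof.
apply: (seqCM_neg closedD E0_in E0_card _ E1_in E1_card _ nc01).
  by rewrite !inE eqxx.
by rewrite !inE eqxx.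
Qed.

End Neg.

Section Pos.
Hypothesis hg : gcdn n j = 1.

Let h0 : 0 < n. Proof. lia. Qed.

Definition v (i : nat) : 'I_n := Ordinal (ltn_pmod (i * j) h0).

Lemma vinj2 a b : a < 2 * n -> b < 2 * n -> v a = v b -> [\/ a = b, a = b + n | b = a + n].
Proof.
move=> ha hb /(congr1 val) /= e.
wlog ba : a b ha hb e / b <= a.
  move=> W; case: (leqP b a) => h; first exact: W.
  by case: (W b a hb ha (esym e) (ltnW h)) => ->; [constructor 1|constructor 3|constructor 2].
have : n %| a * j - b * j by rewrite -eqn_mod_dvd ?leq_mul2r ?ba ?orbT //; apply/eqP.
rewrite -mulnBl Gauss_dvdl; last by rewrite /coprime hg.
case/dvdnP => k hk; have : k = 0 \/ k = 1 by nia.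
by case=> hk'; subst k; [constructor 1|constructor 2]; lia.
Qed.

Lemma sgv_mod x : x < n -> sgv x = (x + j) %% n.
Proof.
move=> hx; rewrite /sgv; case: ifP => h; first by rewrite modn_small.
have e : x + j = (x + j - n) + n by lia.
by rewrite {2}e modnDr modn_small //; lia.
Qed.

Lemma vS i : (v i.+1 : nat) = sgv (v i).
Proof. by rewrite /= sgv_mod ?ltn_pmod // modnDml mulSnr. Qed.

Lemma compv i : compN (v i) (v i.+1).
Proof. rewrite vS; have := sgvE (v i); have := ltn_ord (v i); rewrite /compN; lia. Qed.

Lemma vn : v n = v 0.
Proof. by apply: val_inj; rewrite /= modnMr mul0n mod0n. Qed.

Lemma vsurj (a : 'I_n) : exists2 i, i < n & v i = a.
Proof.
pose f : 'I_n -> 'I_n := fun i => v i.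
have inj : injective f.
  move=> i k /vinj2 h; apply: ord_inj; have hi := ltn_ord i; have hk := ltn_ord k.
  by case: (h ltac:(lia) ltac:(lia)); lia.
have [g fg gf] := injF_bij inj.
by exists (g a); rewrite ?ltn_ord //; exact: gf.
Qed.

Lemma not3 : 3 * j != n.
Proof.
apply/eqP => e; move: hg; rewrite -e gcdnC gcdnMl => j1; lia.
Qed.

Lemma sgo_tgo x : sgo (tgo x) = x.
Proof. apply: val_inj; have := ltn_ord x; rewrite /= /tgv; case: ifP => h; have := sgvE (tgv x); rewrite /tgv h; lia. Qed.

Lemma faceD A : A \in D -> exists2 i, i < n & A \subset [set v i; v i.+1].
Proof.
move=> AD; case: (set_0Vmem A) => [->|[a aA]]; first by exists 0; rewrite ?sub0set.
have [i hi ea] := vsurj a.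
case: (boolP (A \subset [set a])) => hA.
  by exists i => //; apply: subset_trans hA _; rewrite -ea sub1set !inE eqxx.
case/subsetPn: hA => b bA; rewrite inE => ba.
have A2 : #|A| <= 2 by rewrite leqNgt; apply/negP => /(tri3 AD) /eqP; apply/negP; exact: not3.
have eA : A = [set a; b].
  apply/esym/eqP; rewrite eqEcard subUset !sub1set aA bA /= cards2 eq_sym ba.
  exact: A2.
have cab : compN a b by move/inDP: AD; apply => //; rewrite eq_sym.
case: (comp_nbr cab) => eb.
  have hsv : sgo (v i) = v i.+1 by apply: val_inj; rewrite [RHS]vS.
  by exists i => //; rewrite eA eb -ea hsv.
have [k hk ek] := vsurj b.
have hsv : sgo (v k) = v k.+1 by apply: val_inj; rewrite [RHS]vS.
rewrite eA; have -> : a = sgo b by rewrite eb sgo_tgo.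
by exists k => //; rewrite -ek hsv setUC.
Qed.

Lemma sizeD A : A \in D -> #|A| <= 2.
Proof.
case/faceD => i _ hA; apply: leq_trans (subset_leq_card hA) _.
by rewrite cards2; case: (_ != _).
Qed.

Lemma edge_v i : [set v i; v i.+1] \in D.
Proof. exact: pair_in (compv i). Qed.

Lemma connD : connectedc D.
Proof.
move=> x y _ _; apply: (@conn_all _ D (v 0)) => //; [|exact: single_in|exact: single_in].
move=> w _; have [i _ <-] := vsurj w.
elim: i => [|i IH]; first exact: connect0.
apply: connect_trans IH (connect1 _); exact: edge_v.
Qed.

Lemma CM_pos (K : fieldType) : CM K D.
Proof. apply: CM_dim1 closedD sizeD _ => _; exact: connD. Qed.

Lemma S2_pos : S2 D.
Proof. exact: S2_dim1 closedD sizeD connD. Qed.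

Lemma seqCM_pos (K : fieldType) : seqCM K D.
Proof. exact: seqCM_dim1 closedD sizeD connD. Qed.


Lemma vneq a b : a < 2 * n -> b < 2 * n -> a != b -> a != b + n -> b != a + n -> v a != v b.
Proof.
move=> ha hb h1 h2 h3; apply/eqP => /(vinj2 ha hb) [] e; by [rewrite e eqxx in h1|
  rewrite e eqxx in h2|rewrite e eqxx in h3].
Qed.

Definition P (m : nat) : {set {set 'I_n}} :=
  [set A : {set 'I_n} | [exists i : 'I_m.+1, A \subset [set v i; v i.-1]]].

Lemma inPP m (A : {set 'I_n}) : reflect (exists2 i, i <= m & A \subset [set v i; v i.-1]) (A \in P m).
Proof.
rewrite inE; apply: (iffP existsP) => [[i hi]|[i hi hA]].
  by exists i => //; rewrite -ltnS ltn_ord.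
by exists (Ordinal (hi : i < m.+1)).
Qed.

Lemma sub2_drop (p q : 'I_n) (A : {set 'I_n}) : A \subset [set p; q] -> p \notin A -> A \subset [set q].
Proof.
move=> h pA; apply/subsetP => x xA; have := subsetP h x xA; rewrite !inE.
by case/orP => // /eqP ex; subst x; rewrite xA in pA.
Qed.

Lemma sub1_2 (p q : 'I_n) (A : {set 'I_n}) : A \subset [set p] -> A \subset [set q; p].
Proof. by move=> h; apply: subset_trans h _; rewrite sub1set !inE eqxx orbT. Qed.

Lemma sub1_2' (p q : 'I_n) (A : {set 'I_n}) : A \subset [set p] -> A \subset [set p; q].
Proof. by move=> h; apply: subset_trans h _; rewrite sub1set !inE eqxx. Qed.

Lemma notin_pair (x p q : 'I_n) (A : {set 'I_n}) : A \subset [set p; q] -> x != p -> x != q -> x \notin A.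
Proof.
move=> h xp xq; apply/negP => xA; have := subsetP h x xA; rewrite !inE.
by rewrite (negbTE xp) (negbTE xq).
Qed.

Lemma disj1 (A : {set 'I_n}) x : [disjoint A & [set x]] = (x \notin A).
Proof. by rewrite disjoint_sym disjoints1. Qed.

Lemma DP : D = P n.
Proof.
apply/setP => A; apply/idP/idP.
  case/faceD => i hi hA; apply/inPP; exists i.+1 => //; by rewrite /= setUC.
case/inPP => [[|i]] hi hA.
  apply: closedD (edge_v 0) _; apply: subset_trans hA _.
  by rewrite /= setUid sub1set !inE eqxx.
by apply: closedD (edge_v i) _; rewrite /= setUC in hA.
Qed.

Lemma del_P m : m.+1 < n -> del (P m.+1) [set v m.+1] = P m.
Proof.
move=> hm; apply/setP => A; rewrite inE disj1; apply/idP/idP.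
  case/andP => /inPP [i hi hA] nA; apply/inPP.
  case: (ltnP i m.+1) => h; first by exists i.
  have ei : i = m.+1 by lia.
  subst i; exists m => //; apply: sub1_2'; exact: sub2_drop hA nA.
case/inPP => i hi hA; apply/andP; split; first by apply/inPP; exists i => //; lia.
apply: notin_pair hA _ _; apply: vneq; lia.
Qed.

Lemma lk_P m : m.+1 < n -> lk (P m.+1) [set v m.+1] = powerset [set v m].
Proof.
move=> hm; apply/setP => A; rewrite inE disj1 powersetE; apply/idP/idP.
  case/and3P => _ nA /inPP [i hi hA].
  have xin : v m.+1 \in [set v i; v i.-1] by apply: (subsetP hA); rewrite !inE eqxx orbT.
  have ei : i = m.+1.
    move: xin; rewrite !inE => /orP [] /eqP /vinj2 h; case: (h ltac:(lia) ltac:(lia)); lia.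
  subst i; apply: sub2_drop nA; exact: subset_trans (subsetUl _ _) hA.
move=> hA; apply/and3P; split.
- by apply/inPP; exists m => //; apply: sub1_2'.
- by apply: notin_pair (sub1_2' (v m) hA) _ _; apply: vneq; lia.
- by apply/inPP; exists m.+1 => //=; rewrite setUC subUset sub1set !inE eqxx /= sub1_2.
Qed.

Lemma pure_P m : 0 < m <= n -> pure (P m).
Proof.
move=> hm; apply: (@pure_of _ _ 2) => F /inPP [i hi hF].
  by apply: leq_trans (subset_leq_card hF) _; rewrite cards2; case: (_ != _).
case: i hi hF => [|i] hi hF.
  exists [set v 1; v 0].
    by apply/inPP; exists 1 => //; lia.
  rewrite cards2 vneq /= ?andbT; try lia.
  by apply: subset_trans hF _; rewrite setUid sub1set !inE eqxx orbT.
exists [set v i.+1; v i]; first by apply/inPP; exists i.+1.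
by rewrite hF cards2 vneq //=; lia.
Qed.

Lemma vert_P m : [set v m] \in P m.
Proof. by apply/inPP; exists m => //; apply: sub1_2'. Qed.

Lemma P0 : P 0 = powerset [set v 0].
Proof.
apply/setP => A; rewrite powersetE; apply/inPP/idP => [[i hi hA]|hA].
  by move: hi hA; rewrite leqn0 => /eqP -> /=; rewrite setUid.
by exists 0 => //=; rewrite setUid.
Qed.

Lemma vdecP m : m < n -> vdec (P m).
Proof.
elim: m => [|m IH] hm; first by rewrite P0; exact: vdec_simplex.
apply: (@vdec_step _ _ (v m.+1)); first (by apply: pure_P; lia); first exact: vert_P.
  by rewrite lk_P //; exact: vdec_simplex.
rewrite del_P //; apply: IH; lia.
Qed.

Lemma del_C : del (P n) [set v n.-1] = P n.-2.
Proof.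
apply/setP => A; rewrite inE disj1; apply/idP/idP.
  case/andP => /inPP [i hi hA] nA; apply/inPP.
  case: (ltnP i n.-1) => h; first by exists i => //; lia.
  case: (eqVneq i n.-1) => ei.
    subst i; exists n.-2 => //; apply: sub1_2'.
    exact: sub2_drop hA nA.
  have ein : i = n by lia.
  subst i; exists 0 => //=; rewrite setUid -vn.
  apply: sub2_drop nA; by rewrite setUC.
case/inPP => i hi hA; apply/andP; split; first by apply/inPP; exists i => //; lia.
apply: notin_pair hA _ _; apply: vneq; lia.
Qed.

Lemma lk_C : lk (P n) [set v n.-1] = powerset [set v n.-2] :|: powerset [set v 0].
Proof.
apply/setP => A; rewrite inE disj1 in_setU !powersetE; apply/idP/idP.
  case/and3P => _ nA /inPP [i hi hA].
  have xin : v n.-1 \in [set v i; v i.-1] by apply: (subsetP hA); rewrite !inE eqxx orbT.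
  have hA' : A \subset [set v i; v i.-1] by exact: subset_trans (subsetUl _ _) hA.
  move: xin; rewrite !inE => /orP [] /eqP /vinj2 h; case: (h ltac:(lia) ltac:(lia)) => ei; try lia.
    have ei' : i = n.-1 by lia.
    subst i; rewrite (sub2_drop hA' nA) //.
  have ei' : i = n by lia.
  subst i; rewrite setUC vn in hA'; rewrite (sub2_drop hA' nA) ?orbT //.
case/orP => hA; apply/and3P; split.
- by apply/inPP; exists n.-2 => //; [lia | apply: sub1_2'].
- by apply: notin_pair (sub1_2' (v n.-2.-1) hA) _ _; apply: vneq; lia.
- apply/inPP; exists n.-1 => //; first lia.
  rewrite setUC subUset sub1set !inE eqxx /=.
  by rewrite sub1_2.
- by apply/inPP; exists 0 => //=; rewrite setUid.
- by apply: notin_pair (sub1_2' (v 0) hA) _ _; apply: vneq; lia.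
- apply/inPP; exists n => //.
  rewrite setUC subUset sub1set !inE eqxx /= orbT vn.
  by apply: sub1_2'.
Qed.

Lemma vdecD : vdec D.
Proof.
rewrite DP; apply: (@vdec_step _ _ (v n.-1)); first (by apply: pure_P; lia).
- by apply/inPP; exists n.-1 => //; [lia|apply: sub1_2'].
- by rewrite lk_C; apply: vdec_two; apply: vneq; lia.
- by rewrite del_C; apply: vdecP; lia.
Qed.

Lemma pureD : pure D.
Proof. rewrite DP; apply: pure_P; lia. Qed.

Lemma shellD : shellable D.
Proof.
pose s := [seq [set v i; v i.+1] | i <- iota 0 n].
have ss : size s = n by rewrite size_map size_iota.
have ns i : i < n -> nth set0 s i = [set v i; v i.+1].
  by move=> hi; rewrite (nth_map 0) ?size_iota // nth_iota.
have c2 i : i < n -> #|[set v i; v i.+1]| = 2.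
  by move=> hi; rewrite cards2 vneq //; lia.
apply: (@shell1 _ _ s pureD).
- apply: uniq_perm; [|exact: enum_uniq|].
  + rewrite map_inj_in_uniq ?iota_uniq // => a b; rewrite !mem_iota !add0n => /andP[_ ha] /andP[_ hb] e.
    have ina : v a \in [set v b; v b.+1] by rewrite -e !inE eqxx.
    have ina' : v a.+1 \in [set v b; v b.+1] by rewrite -e !inE eqxx orbT.
    move: ina ina'; rewrite !inE => /orP [] /eqP /vinj2 h1 /orP [] /eqP /vinj2 h2;
    case: (h1 ltac:(lia) ltac:(lia)); case: (h2 ltac:(lia) ltac:(lia)); lia.
  + move=> F; rewrite mem_enum; apply/mapP/idP => [[i]|Ff].
      rewrite mem_iota add0n => /andP [_ hi] ->.
      exact: facets_big sizeD (edge_v i) (c2 i hi).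
    have [i hi hF] := faceD (facet_in Ff).
    exists i; first by rewrite mem_iota.
    exact: esym (facet_max Ff (edge_v i) hF).
- by move=> i; rewrite ss => hi; rewrite ns //; exact: c2.
- move=> i /andP [i0 hi]; rewrite ss in hi; exists i.-1; first lia.
  exists (v i), (v i.+1); rewrite ns // ns; last lia.
  rewrite prednK //; split => //; first by rewrite !inE eqxx orbT.
  rewrite !inE negb_or; apply/andP; split; apply: vneq; lia.
Qed.

Lemma pos_all (K : fieldType) : [/\ vdec D, shellable D, CM K D, seqCM K D & S2 D].
Proof. split; [exact: vdecD|exact: shellD|exact: CM_pos|exact: seqCM_pos|exact: S2_pos]. Qed.
End Pos.
End Circ.

Unset Implicit Arguments.

Theorem theorem3p7 (K : fieldType) (n j : nat) :
  (4 <= n)%N -> (1 <= j <= n./2)%N ->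
  let G := circulant n (fun d => (1 <= d <= n./2)%N && (d != j)) in
  let D := indep_complex [set: 'I_n] G in
  let k := (n %/ gcdn n j)%N in
  [/\ nu [set: 'I_n] G = (if k == 4 then 2 else 1)%N,
      well_covered [set: 'I_n] G /\ buchsbaum K [set: 'I_n] G &
      [/\ vdec D <-> gcdn n j = 1%N,
          shellable D <-> gcdn n j = 1%N,
          CM K D <-> gcdn n j = 1%N,
          seqCM K D <-> gcdn n j = 1%N &
          S2 D <-> gcdn n j = 1%N]].
Proof.
move=> hn /andP [hj1 hjh].
have hj2 : (j.*2 <= n)%N by have := odd_double_half n; case: (odd n) => /= h; lia.
split.
- exact: (nu_val hn hj1 hj2).
- split; [exact: (wcov hn hj1 hj2) | exact: (buchs hn hj1 hj2 K)].
case: (eqVneq (gcdn n j) 1) => hg.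
  have [a b c d e] := pos_all hn hj1 hj2 hg K.
  by split; split.
split; split => h; try (by move: hg; rewrite h);
  exfalso.
- exact: (neg_vdec hn hj1 hj2 hg h).
- exact: (neg_shell hn hj1 hj2 hg h).
- exact: (@neg_CM n j hn hj1 hj2 hg K h).
- exact: (@neg_seqCM n j hn hj1 hj2 hg K h).
- exact: (neg_S2 hn hj1 hj2 hg h).
Qed.
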